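(* Let $m$ be a non-zero integer and $n$ any integer. Then \[ 25\sum_{k = 1}^n F_{mk}^{\,4} = \frac{F_{2mn+m}\left(L_{2mn + m} + 4( - 1)^{mn - 1} L_m \right)}{F_{2m}} + 6n+3\,. \]
   Context: $F_i$ and $L_i$ denote the Fibonacci and Lucas numbers, defined for all $i\in\mathbb{Z}$ by $F_i=F_{i-1}+F_{i-2}$, $F_0=0$, $F_1=1$, and $L_i=L_{i-1}+L_{i-2}$, $L_0=2$, $L_1=1$; equivalently $F_{-i}=(-1)^{i-1}F_i$ and $L_{-i}=(-1)^iL_i$. Summation convention for an arbitrary integer upper limit: $\sum_{k=a}^{a-1} f(k)=0$, and for $n<a-1$, $\sum_{k=a}^{n} f(k) = -\sum_{k=n+1}^{a-1} f(k)$. *)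

(* Defs.v *)
From mathcomp Require Import all_boot all_order all_algebra.
Set Implicit Arguments. Unset Strict Implicit. Unset Printing Implicit Defensive.
Import Order.TTheory GRing.Theory Num.Theory.
Local Open Scope ring_scope.

Fixpoint fibn (n : nat) : int :=
  match n with
  | 0%N => 0
  | 1%N => 1
  | (k.+1 as k').+1 => fibn k' + fibn k
  end.

Fixpoint lucn (n : nat) : int :=
  match n with
  | 0%N => 2
  | 1%N => 1
  | (k.+1 as k').+1 => lucn k' + lucn k
  end.

(* Extension to all integer indices:
   F_{-i} = (-1)^(i-1) F_i,  L_{-i} = (-1)^i L_i.
   Negz j denotes -(j+1). *)
Definition F (i : int) : int :=
  match i with
  | Posz n => fibn n
  | Negz j => (-1) ^+ j * fibn j.+1
  end.

Definition L (i : int) : int :=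
  match i with
  | Posz n => lucn n
  | Negz j => (-1) ^+ j.+1 * lucn j.+1
  end.

(* Summation sum_{k=a}^{n} f k for arbitrary integer upper limit n, with the
   convention sum_{k=a}^{a-1} = 0 and, for n < a-1,
   sum_{k=a}^{n} f k = - sum_{k=n+1}^{a-1} f k. *)
Definition zsum (R : zmodType) (a n : int) (f : int -> R) : R :=
  if a - 1 <= n then \sum_(i < absz (n - a + 1)%R) f (a + Posz i)%R
  else - \sum_(i < absz (a - 1 - n)%R) f (n + 1 + Posz i)%R.

(* Main.v *)
Require Import Defs.
From mathcomp Require Import all_boot all_order all_algebra.
From mathcomp Require Import ring lra zify.
Import Order.TTheory GRing.Theory Num.Theory.
Local Open Scope ring_scope.

Lemma int_ind2 (P : int -> Prop) : P 0 -> P 1 ->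
  (forall a, P a -> P (a + 1) -> P (a + 2)) ->
  (forall a, P (a + 1) -> P (a + 2) -> P a) -> forall a, P a.
Proof.
move=> P0 P1 Hf Hb.
have Hn : forall n : nat, P n /\ P (Posz n + 1).
  elim=> [|n [IH1 IH2]]; first by split.
  split; first by have -> : Posz n.+1 = n + 1 by lia.
  have -> : Posz n.+1 + 1 = Posz n + 2 by lia. exact: (Hf (Posz n)).
have Hneg : forall n : nat, P (Negz n) /\ P (Negz n + 1).
  elim=> [|n [IH1 IH2]].
    have H0 : P (-1) by apply: Hb; [have -> : (-1 + 1 : int) = 0 by lia | have -> : (-1 + 2 : int) = 1 by lia].
    split; first by []. by have -> : (Negz 0 + 1 : int) = 0 by lia.
  split; last by have -> : Negz n.+1 + 1 = Negz n by lia.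
  apply: Hb; first by have -> : Negz n.+1 + 1 = Negz n by lia.
  by have -> : Negz n.+1 + 2 = Negz n + 1 by lia.
by case=> n; [case: (Hn n) | case: (Hneg n)].
Qed.

Lemma int_ind1 (P : int -> Prop) : P 0 ->
  (forall a, P a -> P (a + 1)) -> (forall a, P (a + 1) -> P a) -> forall a, P a.
Proof.
move=> P0 Hf Hb.
have Hn : forall n : nat, P n.
  elim=> [|n IH]; first by []. have -> : Posz n.+1 = Posz n + 1 by lia. exact: (Hf (Posz n)).
have Hneg : forall n : nat, P (Negz n).
  elim=> [|n IH]. apply: Hb. by have -> : (Negz 0 + 1 : int) = 0 by lia.
  apply: Hb. by have -> : Negz n.+1 + 1 = Negz n by lia.
by case.
Qed.

Lemma FrecZ (i : int) : F (i + 2) = F (i + 1) + F i.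
Proof.
case: i => [n|j].
  have -> : Posz n + 2 = Posz n.+2 by lia.
  have -> : Posz n + 1 = Posz n.+1 by lia.
  by [].
case: j => [|[|j]]; first by []; first by [].
have -> : Negz j.+2 + 2 = Negz j by lia.
have -> : Negz j.+2 + 1 = Negz j.+1 by lia.
rewrite /F !exprS.
have -> : fibn j.+3 = fibn j.+2 + fibn j.+1 by [].
ring.
Qed.

Lemma LrecZ (i : int) : L (i + 2) = L (i + 1) + L i.
Proof.
case: i => [n|j].
  have -> : Posz n + 2 = Posz n.+2 by lia.
  have -> : Posz n + 1 = Posz n.+1 by lia.
  by [].
case: j => [|[|j]]; first by []; first by [].
have -> : Negz j.+2 + 2 = Negz j by lia.
have -> : Negz j.+2 + 1 = Negz j.+1 by lia.
rewrite /L !exprS.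
have -> : lucn j.+3 = lucn j.+2 + lucn j.+1 by [].
ring.
Qed.

Definition f (i : int) : rat := (F i)%:~R.
Definition l (i : int) : rat := (L i)%:~R.
Definition s (i : int) : rat := (-1) ^ i.

Lemma frec i : f (i + 2) = f (i + 1) + f i.
Proof. by rewrite /f FrecZ rmorphD. Qed.
Lemma lrec i : l (i + 2) = l (i + 1) + l i.
Proof. by rewrite /l LrecZ rmorphD. Qed.
Lemma frec' i : f i = f (i + 2) - f (i + 1).
Proof. rewrite frec. ring. Qed.
Lemma lrec' i : l i = l (i + 2) - l (i + 1).
Proof. rewrite lrec. ring. Qed.

Lemma n1 : (-1 : rat) != 0. Proof. by rewrite oppr_eq0 oner_eq0. Qed.
Lemma sD a b : s (a + b) = s a * s b.
Proof. exact: expfzDr n1. Qed.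
Lemma s1 : s 1 = -1. Proof. by []. Qed.
Lemma s2 : s 2 = 1. Proof. by []. Qed.
Lemma s0 : s 0 = 1. Proof. by []. Qed.
Lemma ss a : s a * s a = 1.
Proof.
elim/int_ind1: a => [|a IH|a IH]; first by rewrite s0 mulr1.
  rewrite sD s1. by rewrite -[RHS]IH; ring.
move: IH; rewrite sD s1 => IH. by rewrite -IH; ring.
Qed.

Lemma f0 : f 0 = 0. Proof. by []. Qed.
Lemma f1 : f 1 = 1. Proof. by []. Qed.
Lemma fm1 : f (-1) = 1. Proof. by []. Qed.
Lemma l0 : l 0 = 2. Proof. by []. Qed.
Lemma l1 : l 1 = 1. Proof. by []. Qed.
Lemma lm1 : l (-1) = -1. Proof. by []. Qed.

Definition isrec (u : int -> rat) := forall i, u (i + 2) = u (i + 1) + u i.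

Lemma rec_uniq u v : isrec u -> isrec v -> u 0 = v 0 -> u 1 = v 1 ->
  forall i, u i = v i.
Proof.
move=> hu hv h0 h1; elim/int_ind2 => // a IH1 IH2.
  by rewrite hu hv IH1 IH2.
have -> : u a = u (a + 2) - u (a + 1) by rewrite hu; ring.
have -> : v a = v (a + 2) - v (a + 1) by rewrite hv; ring.
by rewrite IH1 IH2.
Qed.

Lemma isrec_shift u b : isrec u -> isrec (fun i => u (i + b)).
Proof. by move=> hu i /=; rewrite !(addrAC _ _ b) hu. Qed.
Lemma isrec_scale u c : isrec u -> isrec (fun i => c * u i).
Proof. by move=> hu i /=; rewrite hu; ring. Qed.
Lemma isrec_add u v : isrec u -> isrec v -> isrec (fun i => u i + v i).
Proof. by move=> hu hv i /=; rewrite hu hv; ring. Qed.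
Arguments isrec_shift {u} b.
Arguments isrec_scale {u} c.
Arguments isrec_add {u v}.
Lemma isrec_f : isrec f. Proof. exact: frec. Qed.
Lemma isrec_l : isrec l. Proof. exact: lrec. Qed.

Lemma sS a : s (a + 1) = - s a.
Proof. by rewrite sD s1 mulrN1. Qed.
Lemma sS2 a : s (a + 2) = s a.
Proof. by rewrite sD s2 mulr1. Qed.

Lemma isrec_g : isrec (fun i => s i * f (- i)).
Proof.
move=> i /=.
have e : f (- (i + 2)) = f (- i) - f (- (i + 1)).
  rewrite (frec' (- (i + 2))).
  have -> : - (i + 2) + 2 = - i by ring.
  by have -> : - (i + 2) + 1 = - (i + 1) by ring.
rewrite e sS2 sS; ring.
Qed.

Lemma isrec_h : isrec (fun i => s i * l (- i)).
Proof.
move=> i /=.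
have e : l (- (i + 2)) = l (- i) - l (- (i + 1)).
  rewrite (lrec' (- (i + 2))).
  have -> : - (i + 2) + 2 = - i by ring.
  by have -> : - (i + 2) + 1 = - (i + 1) by ring.
rewrite e sS2 sS; ring.
Qed.

Lemma fN a : f (- a) = - s a * f a.
Proof.
have H := @rec_uniq _ _ isrec_g (@isrec_scale _ (-1) isrec_f) erefl erefl a.
have -> : f (- a) = s a * (s a * f (- a)) by rewrite mulrA ss mul1r.
rewrite H; ring.
Qed.

Lemma lN a : l (- a) = s a * l a.
Proof.
have H := @rec_uniq _ _ isrec_h isrec_l erefl erefl a.
have -> : l (- a) = s a * (s a * l (- a)) by rewrite mulrA ss mul1r.
by rewrite H.
Qed.

Lemma LF b : l b = f (b + 1) + f (b + -1).
Proof.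
have H := (rec_uniq (fun i => l i) (fun i => f (i + 1) + f (i + -1))
  isrec_l (isrec_add (isrec_shift 1 isrec_f) (isrec_shift (-1) isrec_f))).
apply: H; by vm_compute.
Qed.

Lemma fS b : f (b + 1) = f b + f (b + -1).
Proof.
have := frec (b + -1).
have -> : b + -1 + 2 = b + 1 by ring.
by have -> : b + -1 + 1 = b by ring.
Qed.

Lemma addF a b : 2 * f (a + b) = f a * l b + l a * f b.
Proof.
have H := rec_uniq (fun a => 2 * f (a + b)) (fun a => l b * f a + f b * l a)
  (isrec_scale 2 (isrec_shift b isrec_f))
  (isrec_add (isrec_scale (l b) isrec_f) (isrec_scale (f b) isrec_l)).
rewrite H; first by ring.
  by rewrite /= add0r f0 l0; ring.
rewrite /= f1 l1 LF addrC fS; ring.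
Qed.

Lemma addL a b : 2 * l (a + b) = l a * l b + 5 * f a * f b.
Proof.
have H := rec_uniq (fun a => 2 * l (a + b)) (fun a => l b * l a + (5 * f b) * f a)
  (isrec_scale 2 (isrec_shift b isrec_l))
  (isrec_add (isrec_scale (l b) isrec_l) (isrec_scale (5 * f b) isrec_f)).
rewrite H; first by ring.
  by rewrite /= add0r f0 l0; ring.
rewrite /= f1 l1 (LF (1 + b)).
have -> : 1 + b + 1 = (b + 1) + 1 by ring.
have -> : 1 + b + -1 = b by ring.
rewrite (fS (b + 1)) (_ : b + 1 + -1 = b); last by ring.
rewrite LF fS; ring.
Qed.

Lemma by_rel (x y z t : rat) : x - y = (1 - t) * z -> t = 1 -> x = y.
Proof. by move=> h ht; apply/eqP; rewrite -subr_eq0 h ht subrr mul0r. Qed.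

Lemma diffF a b : f (a + b) - s b * f (a + - b) = f b * l a.
Proof.
have h1 := addF a b; have h2 := addF a (- b).
rewrite fN lN in h2.
have hX : f (a + b) = (f a * l b + l a * f b) / 2 by rewrite -h1; field.
have hY : f (a + - b) = (f a * (s b * l b) + l a * (- s b * f b)) / 2
  by rewrite -h2; field.
rewrite hX hY.
apply: (@by_rel _ _ ((f a * l b - l a * f b) / 2) (s b * s b)); last exact: ss.
by field.
Qed.

Lemma f2 a : f (2 * a) = f a * l a.
Proof.
have h := addF a a. have -> : 2 * a = a + a by ring.
have -> : f (a + a) = (2 * f (a + a)) / 2 by field.
by rewrite h; field.
Qed.

Lemma l2 a : 2 * l (2 * a) = l a * l a + 5 * (f a * f a).
Proof.
have h := addL a a. have -> : 2 * a = a + a by ring.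
rewrite h; ring.
Qed.

Lemma cass a : l a * l a - 5 * (f a * f a) = 4 * s a.
Proof.
have H := addL a (- a).
rewrite subrr l0 lN fN in H.
have h' : s a * (l a * l a - 5 * (f a * f a)) = 4.
  have -> : s a * (l a * l a - 5 * (f a * f a)) =
     l a * (s a * l a) + 5 * f a * (- s a * f a) by ring.
  rewrite -H; ring.
by rewrite -h' [RHS]mulrC [RHS]mulrA ss mul1r.
Qed.

Lemma fourth k :
  25 * f k ^+ 4 = l (2 * (2 * k)) - 4 * s k * l (2 * k) + 6.
Proof.
have hcas := cass k.
have hl2 : l (2 * k) = 5 * (f k * f k) + 2 * s k.
  have -> : l (2 * k) = (2 * l (2 * k)) / 2 by field.
  rewrite l2.
  have -> : l k * l k = 5 * (f k * f k) + 4 * s k by rewrite -hcas; ring.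
  by field.
have hf2sq : f (2 * k) * f (2 * k) = f k * f k * (5 * (f k * f k) + 4 * s k).
  by rewrite f2 -hcas; ring.
have -> : l (2 * (2 * k)) = (2 * l (2 * (2 * k))) / 2 by field.
rewrite l2 hf2sq hl2.
apply: (@by_rel _ _ (-6) (s k * s k)); last exact: ss.
by field.
Qed.

Lemma zsumS (g : int -> rat) (n : int) : zsum 1 (n + 1) g = zsum 1 n g + g (n + 1).
Proof.
rewrite /zsum.
case: n => [k|[|k]].
- rewrite (_ : (1 - 1 <= Posz k + 1) = true); last by lia.
  rewrite (_ : (1 - 1 <= Posz k) = true); last by lia.
  rewrite (_ : absz ((Posz k + 1 - 1 + 1)%R) = k.+1); last by lia.
  rewrite (_ : absz ((Posz k - 1 + 1)%R) = k); last by lia.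
  rewrite big_ord_recr /=. congr (_ + g _). lia.
- rewrite (_ : (1 - 1 <= Negz 0 + 1) = true); last by lia.
  rewrite (_ : (1 - 1 <= Negz 0) = false); last by apply: negbTE; lia.
  rewrite (_ : absz ((Negz 0 + 1 - 1 + 1)%R) = 0%N); last by lia.
  rewrite (_ : absz ((1 - 1 - Negz 0)%R) = 1%N); last by lia.
  rewrite big_ord0 big_ord1 /=.
  have -> : Negz 0 + 1 + 0 = Negz 0 + 1 by lia.
  by rewrite addNr.
- rewrite (_ : (1 - 1 <= Negz k.+1 + 1) = false); last by apply: negbTE; lia.
  rewrite (_ : (1 - 1 <= Negz k.+1) = false); last by apply: negbTE; lia.
  rewrite (_ : absz ((1 - 1 - (Negz k.+1 + 1))%R) = k.+1); last by lia.
  rewrite (_ : absz ((1 - 1 - Negz k.+1)%R) = k.+2); last by lia.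
  rewrite [in RHS]big_ord_recl opprD.
  have -> : g (Negz k.+1 + 1 + @ord0 k.+1) = g (Negz k.+1 + 1).
    congr g; rewrite /=; lia.
  rewrite [RHS]addrAC addNr add0r. congr (- _). apply: eq_bigr => i _. congr g.
  rewrite /= /bump /= add1n. lia.
Qed.

Lemma fib_pos n : (0 <= fibn n) && (0 < fibn n.+1).
Proof.
elim: n => [|n /andP [h1 h2]] //.
apply/andP; split; first by lia.
have -> : fibn n.+2 = fibn n.+1 + fibn n by [].
lia.
Qed.

Lemma fneq0 a : a != 0 -> f a != 0.
Proof.
rewrite /f intr_eq0.
case: a => [[|n]|j] //= _.
  by move/andP: (fib_pos n) => [_ h]; rewrite gt_eqF.
rewrite mulf_eq0 negb_or signr_eq0 /=.
by move/andP: (fib_pos j) => [_ h]; rewrite gt_eqF.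
Qed.

Lemma sN a : s (- a) = s a.
Proof.
have h : s a * s (- a) = 1 by rewrite -sD subrr.
by rewrite -[s (- a)]mul1r -(ss a) -mulrA h mulr1.
Qed.

Definition Rr (m n : int) : rat :=
  f (2 * m * n + m) * (l (2 * m * n + m) + 4 * s (m * n - 1) * l m) / f (2 * m)
  + (6 * n + 3)%:~R.

Lemma keyR m a : m != 0 -> Rr m (a + 1) = Rr m a + 25 * f (m * (a + 1)) ^+ 4.
Proof.
move=> hm.
have hc : f (2 * m) != 0 by apply: fneq0; rewrite mulf_eq0 negb_or hm.
have hfm : f m != 0 by move: hc; rewrite f2 mulf_eq0 negb_or => /andP [].
have hlm : l m != 0 by move: hc; rewrite f2 mulf_eq0 negb_or => /andP [].
set k := m * (a + 1).
set A := 2 * k.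
rewrite /Rr.
rewrite (_ : 2 * m * (a + 1) + m = A + m); last by rewrite /A /k; ring.
rewrite (_ : 2 * m * a + m = A + - m); last by rewrite /A /k; ring.
rewrite (_ : m * (a + 1) - 1 = k + -1); last by rewrite /k; ring.
rewrite (_ : m * a - 1 = k + - m + -1); last by rewrite /k; ring.
rewrite !sD sN (_ : s (-1) = -1) //.
rewrite (_ : (6 * (a + 1) + 3) = (6 * a + 3) + 6); last by ring.
rewrite rmorphD /= (_ : (6 : int)%:~R = 6 :> rat) //.
rewrite fourth.
have hxy := diffF (2 * A) (2 * m).
rewrite (_ : s (2 * m) = 1) in hxy; last by rewrite (_ : 2 * m = m + m) ?sD ?ss //; ring.
rewrite (_ : 2 * A + 2 * m = 2 * (A + m)) in hxy; last by ring.
rewrite (_ : 2 * A + - (2 * m) = 2 * (A + - m)) in hxy; last by ring.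
have hx := diffF A m.
have hl2A : l (2 * A) = (f (2 * (A + m)) - 1 * f (2 * (A + - m))) / f (2 * m).
  by rewrite hxy; field.
have hlA : l A = (f (A + m) - s m * f (A + - m)) / f m.
  by rewrite hx; field.
rewrite -/A hl2A hlA !f2.
field.
by rewrite hfm hlm.
Qed.

Theorem theorem1 (m n : int) (hm : m != 0) :
  25 * zsum 1 n (fun k : int => ((F (m * k))%:~R : rat) ^+ 4)
  = (F (2 * m * n + m))%:~R
      * ((L (2 * m * n + m))%:~R + 4 * (-1) ^ (m * n - 1) * (L m)%:~R)
      / (F (2 * m))%:~R
    + (6 * n + 3)%:~R.
Proof.
change (25 * zsum 1 n (fun k : int => f (m * k) ^+ 4) = Rr m n).
have hc : f (2 * m) != 0 by apply: fneq0; rewrite mulf_eq0 negb_or hm.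
have hfm : f m != 0 by move: hc; rewrite f2 mulf_eq0 negb_or => /andP [].
have hlm : l m != 0 by move: hc; rewrite f2 mulf_eq0 negb_or => /andP [].
elim/int_ind1: n => [|a IH|a IH].
- rewrite (_ : zsum 1 0 _ = 0); last by rewrite /zsum /= big_ord0.
  rewrite /Rr (_ : 2 * m * 0 + m = m); last by ring.
  rewrite (_ : m * 0 - 1 = -1); last by ring.
  rewrite (_ : s (-1) = -1) // (_ : 6 * 0 + 3 = 3); last by ring.
  rewrite f2 (_ : (3 : int)%:~R = 3 :> rat) //.
  field. by rewrite hfm hlm.
- by rewrite zsumS mulrDr IH keyR.
- move: IH; rewrite zsumS mulrDr keyR // => /addIr H; exact: H.
Qed.
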